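(* Let $m$ and $\ell$ be positive integers, let $d=\gcd(m,\ell)$, and let $n$ be an integer with $2\le n\le m$. Then $H(n;\ell,m)=1$ if and only if $H(n;m/d)\le d$. That is: there exist pairwise distinct $x_1,\dots,x_n\in\Omega_m$ with $x_1^{\ell}+\cdots+x_n^{\ell}=0$ if and only if $n\in W(m/d)$ and there exist $y_1,\dots,y_n\in\Omega_{m/d}$ with $y_1+\cdots+y_n=0$ in which each element of $\Omega_{m/d}$ occurs at most $d$ times among $y_1,\dots,y_n$.
   Context: For a positive integer $k$, $\Omega_k$ denotes the set of complex $k$th roots of unity. For positive integers $m,\ell$, $W_\ell(m)$ is the set of positive integers $n$ for which there exist $x_1,\dots,x_n\in\Omega_m$ (repetition allowed) with $x_1^{\ell}+\cdots+x_n^{\ell}=0$; $W(m)=W_1(m)$. For $n\in W_\ell(m)$, the height $H(n;\ell,m)$ is the smallest positive integer $h$ such that there exist $x_1,\dots,x_n\in\Omega_m$ with $x_1^{\ell}+\cdots+x_n^{\ell}=0$ and every value occurs at most $h$ times in the list $x_1,\dots,x_n$ (the maximum multiplicity is $h$). For $n\in W(m)$, $H(n;m)$ denotes $H(n;1,m)$. The statement $H(n;\ell,m)=1$ is understood to include $n\in W_\ell(m)$, and $H(n;m/d)\le d$ to include $n\in W(m/d)$. *)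

(* Defs.v *)
(* Complex numbers are modelled by algC (algebraic complex
   numbers), which contains all roots of unity. *)
From mathcomp Require Import all_boot all_order all_algebra all_field.
Set Implicit Arguments. Unset Strict Implicit. Unset Printing Implicit Defensive.
Import Order.TTheory GRing.Theory Num.Theory.
Local Open Scope ring_scope.

Definition in_Omega (k : nat) (x : algC) : Prop := x ^+ k = 1.

Definition mult (n : nat) (x : 'I_n -> algC) (z : algC) : nat :=
  #|[pred i | x i == z]|.

Definition in_W (l m n : nat) : Prop :=
  (0 < n)%N /\
  exists x : 'I_n -> algC,
    (forall i, in_Omega m (x i)) /\ \sum_(i < n) x i ^+ l = 0.

(* n \in W_l(m) and H(n; l, m) <= h : there is a vanishing configuration
   in which every value occurs at most h times (H is the least such h). *)
Definition height_le (n l m h : nat) : Prop :=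
  exists x : 'I_n -> algC,
    (forall i, in_Omega m (x i)) /\ \sum_(i < n) x i ^+ l = 0 /\
    (forall z, (mult x z <= h)%N).

(* Main.v *)
Require Import Defs.
From mathcomp Require Import all_boot all_order all_algebra all_field.
From mathcomp Require Import zify.
Import Order.TTheory GRing.Theory Num.Theory.
Local Open Scope ring_scope.

Lemma gcd_root (x : algC) m l : (0 < m)%N -> x ^+ m = 1 -> x ^+ l = 1 ->
  x ^+ gcdn m l = 1.
Proof.
move=> m0 xm xl; have [a _ /dvdnP [q Hq]] := Bezoutl l m0.
have : x ^+ (gcdn m l + a * l) = 1 by rewrite Hq mulnC exprM xm expr1n.
by rewrite exprD mulnC exprM xl expr1n mulr1.
Qed.

Lemma mult_inj n (x : 'I_n -> algC) : (forall z, (mult x z <= 1)%N) -> injective x.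
Proof.
move=> H i j eij; have := H (x i); rewrite /mult => /card_le1_eqP; apply;
  by rewrite inE ?eij.
Qed.

Lemma inj_mult n (x : 'I_n -> algC) z : injective x -> (mult x z <= 1)%N.
Proof.
move=> xinj; apply/card_le1_eqP => i j; rewrite !inE => /eqP ei /eqP ej.
by apply: xinj; rewrite ei ej.
Qed.

Lemma fwd_count m l n (x : 'I_n -> algC) z : (0 < m)%N ->
  (forall i, x i ^+ m = 1) -> injective x ->
  (mult (fun i => x i ^+ l) z <= gcdn m l)%N.
Proof.
move=> m0 xm xinj; rewrite /mult.
set A := [pred i | _].
have [/eqP A0|] := posnP #|A|; first by rewrite (eqP A0).
case/card_gt0P => i0 Ai0.
have d0 : (0 < gcdn m l)%N by rewrite gcdn_gt0 m0.
have x0 : forall i, x i != 0.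
  move=> i; apply/eqP=> e; have := xm i; rewrite e expr0n (gtn_eqF m0).
  by move/esym/eqP; rewrite oner_eq0.
pose p : {poly algC} := 'X^(gcdn m l) - (x i0 ^+ gcdn m l)%:P.
have pn0 : p != 0 by rewrite -size_poly_eq0 size_XnsubC.
have hall : all (root p) [seq x i | i <- enum A].
  apply/allP => _ /mapP [i iA ->]; rewrite mem_enum inE /= in iA.
  rewrite /root /p hornerD hornerN hornerXn hornerC subr_eq0.
  rewrite inE /= in Ai0.
  apply/eqP/divr1_eq; rewrite -expr_div_n; apply: gcd_root => //.
    by rewrite expr_div_n !xm divr1.
  rewrite expr_div_n (eqP iA) (eqP Ai0) divff // -(eqP Ai0) expf_neq0 //.
have huniq : uniq [seq x i | i <- enum A] by rewrite map_inj_uniq // enum_uniq.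
have := max_poly_roots pn0 hall huniq.
by rewrite size_map -cardE size_XnsubC.
Qed.

Theorem theorem3 (m l n : nat) :
  (0 < m)%N -> (0 < l)%N -> (2 <= n)%N -> (n <= m)%N ->
  (height_le n l m 1 <->
   (in_W 1 (m %/ gcdn m l) n /\ height_le n 1 (m %/ gcdn m l) (gcdn m l))).
Proof.
move=> m0 l0 n2 nm.
have d0 : (0 < gcdn m l)%N by rewrite gcdn_gt0 m0.
have dm : (gcdn m l %| m)%N := dvdn_gcdl m l.
have dl : (gcdn m l %| l)%N := dvdn_gcdr m l.
have mE : (m %/ gcdn m l * gcdn m l = m)%N := divnK dm.
have lE : (l %/ gcdn m l * gcdn m l = l)%N := divnK dl.
set d := gcdn m l in d0 dm dl mE lE *.
set m' := (m %/ d)%N in mE *.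
set l' := (l %/ d)%N in lE *.
have m'0 : (0 < m')%N by rewrite divn_gt0 // dvdn_leq.
have [w pw] := C_prim_root_exists m0.
split.
- case=> x [xm [xs xmul]].
  have xinj := @mult_inj _ x xmul.
  have ym : forall i, (x i ^+ l) ^+ m' = 1.
    move=> i; rewrite -exprM.
    have -> : (l * m' = m * l')%N by rewrite -mE -lE; lia.
    by rewrite exprM xm expr1n.
  have ys : \sum_(i < n) (x i ^+ l) ^+ 1 = 0.
    exact: xs.
  split.
    split; first lia.
    by exists (fun i => x i ^+ l); split.
  exists (fun i => x i ^+ l); split => //; split => // z.
  exact: fwd_count.
- case=> _ [y [ym [ys ymul]]].
  have pwl : m'.-primitive_root (w ^+ l).
    by have := exp_prim_root pw l; rewrite gcdnC.
  pose j i := sval (prim_rootP pwl (ym i)).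
  have yj : forall i, y i = (w ^+ l) ^+ j i := fun i => svalP (prim_rootP pwl (ym i)).
  pose k (i : 'I_n) := #|[pred i' : 'I_n | (i' < i)%N && (y i' == y i)]|.
  have kd : forall i, (k i < d)%N.
    move=> i; apply: leq_trans (ymul (y i)); apply: proper_card.
    apply/properP; split.
      by apply/subsetP => i'; rewrite !inE /= => /andP[_ ->].
    by exists i; rewrite !inE /= ?eqxx ?ltnn.
  have klt : forall i i', y i = y i' -> (i < i')%N -> (k i < k i')%N.
    move=> i i' ey lt; apply: proper_card; apply/properP; split.
      apply/subsetP => i''; rewrite !inE /= => /andP[h1 h2].
      by rewrite (ltn_trans h1 lt) -ey.
    by exists i; rewrite !inE /= ?lt ?ey ?eqxx ?ltnn.
  have kinj : forall i i', y i = y i' -> k i = k i' -> i = i'.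
    move=> i i' ey ek; case: (ltngtP i i') => [lt|lt|/val_inj //].
      by have := klt _ _ ey lt; rewrite ek ltnn.
    by have := klt _ _ (esym ey) lt; rewrite ek ltnn.
  have xl : forall i, (w ^+ (j i + m' * k i)) ^+ l = y i.
    move=> i; rewrite -exprM mulnC exprM exprD exprM (prim_expr_order pwl).
    by rewrite expr1n mulr1 yj.
  have jbnd : forall i, (j i + m' * k i < m)%N.
    move=> i; have := leq_mul (leqnn m') (kd i); have := ltn_ord (j i).
    rewrite -mE; lia.
  exists (fun i => w ^+ (j i + m' * k i)); split; [|split].
  + move=> i; rewrite /in_Omega -exprM mulnC exprM (prim_expr_order pw).
    by rewrite expr1n.
  + rewrite (eq_bigr y); first exact: ys.
    by move=> i _; rewrite xl.
  + move=> z; apply: inj_mult => i i' e.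
    have ey : y i = y i' by rewrite -xl e xl.
    have ej : j i = j i'.
      apply/val_inj; move: ey; rewrite !yj => /eqP.
      by rewrite (eq_prim_root_expr pwl) !modn_small //; move/eqP.
    apply: kinj => //; move: e => /eqP; rewrite (eq_prim_root_expr pw).
    rewrite !modn_small // ej eqn_add2l eqn_pmul2l //; by move/eqP.
Qed.
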